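(* Consider a Zosin–Khuller type instance built from $H=(\mathcal{A}\uplus\mathcal{B},E_H)$, $K$, $\{M_t\}_{t\in K}$ with parameters $d,d',k,s$ as in the context. Let $\alpha\ge 1$ be a real number. Suppose that for every $u\in\mathcal{A}$ there is a set $J_u\subseteq K$ with $|J_u|\le d/\alpha$ such that for every edge $\{u,v\}\in E_H$ (with $v\in\mathcal{B}$) we have $|K_v\setminus J_u|\le d'/\alpha$. Then every subgraph of $G$ that contains a directed path from $r$ to every terminal $t\in K$ has total cost at least $\alpha|\mathcal{B}|/s$.
   Context: A Zosin–Khuller type instance is specified by: (P1) a bipartite graph $H=(\mathcal{A}\uplus\mathcal{B},E_H)$ with $|\mathcal{A}|\le|\mathcal{B}|$, every vertex of $\mathcal{A}$ of degree $d$ and every vertex of $\mathcal{B}$ of degree $d'$; (P2) a set $K$ of $k$ terminals and a partition $\{M_t\}_{t\in K}$ of $E_H$ into $k$ matchings, each of size $s$ (so $sk=d|\mathcal{A}|=d'|\mathcal{B}|=|E_H|$; edges in $M_t$ are said to have color $t$); (P3) for $v\in\mathcal{B}$, $K_v=\{t\in K: v \text{ is matched in } M_t\}$, so $|K_v|=d'$. The DST instance is the directed graph $G$ with vertex set $\{r\}\uplus\mathcal{A}\uplus\mathcal{B}\uplus\mathcal{B}'\uplus K$, where $\mathcal{B}'$ is a disjoint copy of $\mathcal{B}$ via a bijection $\pi:\mathcal{B}\to\mathcal{B}'$, and edges: $E_1=\{(r,u):u\in\mathcal{A}\}$ each of cost $|\mathcal{B}|/|\mathcal{A}|$; $E_2=\{(u,v):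 \{u,v\}\in E_H, u\in\mathcal{A}, v\in\mathcal{B}\}$ each of cost $0$; $E_3=\{(v,\pi(v)):v\in\mathcal{B}\}$ each of cost $1$; $E_4=\{(\pi(v),t): v\in\mathcal{B}, t\in K_v\}$ each of cost $0$. The root is $r$ and the terminal set is $K$. *)

(* Defs.v *)
From HB Require Import structures.
From mathcomp Require Import all_boot all_order all_algebra.
Set Implicit Arguments. Unset Strict Implicit. Unset Printing Implicit Defensive.
Import Order.TTheory GRing.Theory Num.Theory.

(* EH : {set A * B}  edges of H (an edge {u,v} with u in A, v in B is (u,v)).
   col : A * B -> K  the colour of an edge (only meaningful on EH);
   M_t := [set e in EH | col e == t]. *)

Definition Mcol (A B K : finType) (EH : {set A * B}) (col : A * B -> K) (t : K)
  : {set A * B} := [set e in EH | col e == t].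

Definition is_matching (A B : finType) (M : {set A * B}) : Prop :=
  forall e1 e2, e1 \in M -> e2 \in M ->
    (e1.1 = e2.1 \/ e1.2 = e2.2) -> e1 = e2.

Definition Kv (A B K : finType) (EH : {set A * B}) (col : A * B -> K) (v : B)
  : {set K} := [set t | [exists u : A, (u, v) \in Mcol EH col t]].

Definition DV (A B K : finType) : finType := option (A + (B + (B + K))).
Definition vr (A B K : finType) : DV A B K := None.
Definition vA (A B K : finType) (u : A) : DV A B K := Some (inl u).
Definition vB (A B K : finType) (v : B) : DV A B K := Some (inr (inl v)).
Definition vB' (A B K : finType) (v : B) : DV A B K := Some (inr (inr (inl v))).
Definition vK (A B K : finType) (t : K) : DV A B K := Some (inr (inr (inr t))).

Definition E1 (A B K : finType) : {set DV A B K * DV A B K} :=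
  [set e | [exists u : A, e == (vr A B K, vA B K u)]].
Definition E2 (A B K : finType) (EH : {set A * B}) : {set DV A B K * DV A B K} :=
  [set e | [exists u : A, exists v : B, ((u, v) \in EH) && (e == (vA B K u, vB A K v))]].
Definition E3 (A B K : finType) : {set DV A B K * DV A B K} :=
  [set e | [exists v : B, e == (vB A K v, vB' A K v)]].
Definition E4 (A B K : finType) (EH : {set A * B}) (col : A * B -> K)
  : {set DV A B K * DV A B K} :=
  [set e | [exists v : B, exists t : K, (t \in Kv EH col v) && (e == (vB' A K v, vK A B t))]].

Definition EG (A B K : finType) (EH : {set A * B}) (col : A * B -> K)
  : {set DV A B K * DV A B K} :=
  E1 A B K :|: E2 K EH :|: E3 A B K :|: E4 EH col.

Definition edge_cost (R : realFieldType) (A B K : finType) (e : DV A B K * DV A B K) : R :=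
  if e \in E1 A B K then (#|B|%:R / #|A|%:R)%R
  else if e \in E3 A B K then 1%R else 0%R.

Definition total_cost (R : realFieldType) (A B K : finType) (F : {set DV A B K * DV A B K}) : R :=
  (\sum_(e in F) edge_cost R e)%R.

Definition has_path (A B K : finType) (F : {set DV A B K * DV A B K}) (x y : DV A B K) : bool :=
  connect (fun a b => (a, b) \in F) x y.

(* Main.v *)
Require Import Defs.
From HB Require Import structures.
From mathcomp Require Import all_boot all_order all_algebra.
From mathcomp Require Import ring.
Import Order.TTheory GRing.Theory Num.Theory.

Set Implicit Arguments. Unset Strict Implicit.

Lemma card_bigcup_le (I T : finType) (P : pred I) (F : I -> {set T}) :
  (#|\bigcup_(i | P i) F i| <= \sum_(i | P i) #|F i|)%N.
Proof.
apply: (big_ind2 (fun (X : {set T}) n => #|X| <= n)%N) => //.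
- by rewrite cards0.
- move=> X1 n1 X2 n2 h1 h2; apply: leq_trans (leq_card_setU _ _) _.
  exact: leq_add.
Qed.

Section Reach.
Variables (A B K : finType) (EH : {set A * B}) (col : A * B -> K).
Variable F : {set DV A B K * DV A B K}.

Definition SS (x : DV A B K) : bool :=
  match x with
  | None => true
  | Some (inl u) => (vr A B K, vA B K u) \in F
  | Some (inr (inl v)) => [exists u, ((vr A B K, vA B K u) \in F) && ((u, v) \in EH)]
  | Some (inr (inr (inl v))) => ((vB A K v, vB' A K v) \in F) &&
       [exists u, ((vr A B K, vA B K u) \in F) && ((u, v) \in EH)]
  | Some (inr (inr (inr t))) => [exists v, [&& (vB A K v, vB' A K v) \in F,
       [exists u, ((vr A B K, vA B K u) \in F) && ((u, v) \in EH)] & t \in Kv EH col v]]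
  end.

Lemma SS_step x y : F \subset EG EH col -> (x, y) \in F -> SS x -> SS y.
Proof.
move=> /subsetP sub xyF; move: xyF (sub _ xyF).
rewrite !inE -!orbA => xyF /or4P [].
- by case/existsP => u /eqP [ex ey]; subst x y.
- case/existsP => u /existsP [v] /andP [uv /eqP [-> ->]] /= Hu.
  by apply/existsP; exists u; rewrite Hu uv.
- by case/existsP => v /eqP [ex ey]; subst x y => /= ->; rewrite xyF.
- case/existsP => v /existsP [t] /andP [tK /eqP [-> ->]] /= /andP [h1 h2].
  by apply/existsP; exists v; rewrite h1 h2 tK.
Qed.

Lemma SS_reach y : F \subset EG EH col -> has_path F (vr A B K) y -> SS y.
Proof.
move=> sub /connectP [p pth ->].
have : SS (vr A B K) by [].
elim: p (vr A B K) pth => [|z p IH] x //= /andP [xz pth] Sx.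
exact: IH pth (SS_step sub xz Sx).
Qed.
End Reach.
Local Open Scope ring_scope.
Section Cost.
Variables (R : realFieldType) (A B K : finType) (EH : {set A * B}) (col : A * B -> K).
Variable F : {set DV A B K * DV A B K}.

Lemma edge_cost_ge0 (e : DV A B K * DV A B K) : 0 <= @edge_cost R A B K e.
Proof. by rewrite /edge_cost; case: ifP => _; [|case: ifP => _] ; rewrite ?divr_ge0 ?ler01. Qed.

Lemma cost_lb :
  (#|B|%:R / #|A|%:R) *+ #|[set u | (vr A B K, vA B K u) \in F]|
  + #|[set v | (vB A K v, vB' A K v) \in F]|%:R <= total_cost R F.
Proof.
set AF := [set u | _ \in F]; set BF := [set v | _ \in F].
pose f1 := fun u : A => (vr A B K, vA B K u).
pose f3 := fun v : B => (vB A K v, vB' A K v).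
set X := f1 @: AF; set Y := f3 @: BF.
have XYF : X :|: Y \subset F.
  apply/subsetP => e; rewrite inE => /orP [] /imsetP [w]; rewrite inE => h ->//.
have dXY : [disjoint X & Y].
  rewrite -setI_eq0; apply/eqP/setP => e; rewrite !inE.
  apply/negbTE/negP => /andP [/imsetP [u _ ->] /imsetP [v _]] //.
rewrite /total_cost (big_setID (X :|: Y)) /= (setIidPr XYF).
rewrite -[X in X <= _]addr0; apply: lerD; last first.
  by apply: sumr_ge0 => e _; apply: edge_cost_ge0.
rewrite (eq_bigl [predU X & Y]); last by move=> e; rewrite !inE.
rewrite bigU //= !big_imset /=; last 2 first.
- by move=> v1 v2 _ _ [].
- by move=> u1 u2 _ _ [].
rewrite -[_ *+ #|AF|]sumr_const -[#|BF|%:R]sumr_const; apply: lerD; apply: ler_sum => w _.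
- by rewrite /edge_cost ifT // /E1 inE; apply/existsP; exists w.
- rewrite /edge_cost ifF; last first.
    by rewrite /E1 inE; apply/existsP => -[u].
  by rewrite ifT // /E3 inE; apply/existsP; exists w.
Qed.
End Cost.

Lemma sum1_set (T : finType) (P : pred T) : (\sum_(x | P x) 1 = #|[set x | P x]|)%N.
Proof. by rewrite -sum1_card; apply: eq_bigl => x; rewrite inE. Qed.

Theorem lemma3p1 (R : realFieldType) (A B K : finType)
  (EH : {set A * B}) (col : A * B -> K) (d d' k s : nat)
  (hAB : (#|A| <= #|B|)%N)
  (hdegA : forall u : A, #|[set v : B | (u, v) \in EH]| = d)
  (hdegB : forall v : B, #|[set u : A | (u, v) \in EH]| = d')
  (hk : #|K| = k) (hk0 : (0 < k)%N)
  (hmatch : forall t : K, is_matching (Mcol EH col t))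
  (hsize : forall t : K, #|Mcol EH col t| = s)
  (alpha : R) (halpha : 1 <= alpha)
  (hJ : exists J : A -> {set K},
      forall u : A, (#|J u|%:R <= d%:R / alpha) /\
        (forall v : B, (u, v) \in EH -> #|Kv EH col v :\: J u|%:R <= d'%:R / alpha)) :
  forall F : {set DV A B K * DV A B K},
    F \subset EG EH col ->
    (forall t : K, has_path F (vr A B K) (vK A B t)) ->
    alpha * #|B|%:R / s%:R <= total_cost R F.
Proof.
move=> F sub paths.
have [J hJ'] := hJ.
have alpha0 : 0 < alpha by apply: lt_le_trans halpha.
set AF := [set u | (vr A B K, vA B K u) \in F].
set BF := [set v | (vB A K v, vB' A K v) \in F].
set BR := [set v in BF | [exists u, ((vr A B K, vA B K u) \in F) && ((u,v) \in EH)]].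
set U := \bigcup_(u in AF) J u.
have cover : [set: K] \subset U :|: \bigcup_(v in BR) (Kv EH col v :\: U).
  apply/subsetP => t _; have := SS_reach sub (paths t).
  rewrite /= => /existsP [v /and3P [h1 h2 h3]].
  rewrite inE; case: (boolP (t \in U)) => //= tU.
  apply/bigcupP; exists v; first by rewrite !inE h1 h2.
  by rewrite inE tU h3.
have hk_nat : (k <= \sum_(u in AF) #|J u| + \sum_(v in BR) #|Kv EH col v :\: U|)%N.
  rewrite -hk -cardsT; apply: leq_trans (subset_leq_card cover) _.
  apply: leq_trans (leq_card_setU _ _) _.
  by apply: leq_add; apply: card_bigcup_le.
have hreal : alpha * k%:R <= d%:R *+ #|AF| + d'%:R *+ #|BR|.
  apply: le_trans (_ : alpha * (\sum_(u in AF) #|J u| + \sum_(v in BR) #|Kv EH col v :\: U|)%N%:R <= _).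
    by rewrite ler_pM2l // ler_nat.
  rewrite natrD !natr_sum mulrDr !mulr_sumr.
  rewrite -[d%:R *+ _]sumr_const -[d'%:R *+ _]sumr_const.
  apply: lerD; apply: ler_sum.
  - move=> u _; have [h _] := hJ' u; by rewrite mulrC -ler_pdivlMr.
  - move=> v; rewrite inE => /andP [_ /existsP [u /andP [uF uv]]].
    have [_ h] := hJ' u; have := h v uv; rewrite ler_pdivlMr // mulrC.
    apply: le_trans; rewrite ler_pM2l // ler_nat; apply: subset_leq_card.
    by apply: setDS; apply: bigcup_sup; rewrite inE.
have hBR : (#|BR| <= #|BF|)%N.
  by apply: subset_leq_card; apply/subsetP => v; rewrite inE => /andP [].
have hcost := cost_lb R F.
have hEk : (#|EH| = k * s)%N.
  rewrite -sum1_card (partition_big col xpredT) //=.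
  rewrite (eq_bigr (fun _ => s)); last first.
    move=> t _; rewrite -(hsize t) /Mcol -sum1_card; apply: eq_bigl => e; by rewrite !inE.
  by rewrite sum_nat_const cardT -cardE hk.
have hEsum : (#|EH| = \sum_(u : A) \sum_(v | (u, v) \in EH) 1)%N.
  rewrite pair_big_dep /= -sum1_card; apply: eq_bigl => -[u v] //=.
have hEA : (#|EH| = #|A| * d)%N.
  rewrite hEsum (eq_bigr (fun _ => d)); last by move=> u _; rewrite sum1_set hdegA.
  by rewrite sum_nat_const cardT -cardE.
have hEB : (#|EH| = #|B| * d')%N.
  rewrite hEsum (exchange_big_dep xpredT) //=.
  rewrite (eq_bigr (fun _ => d')); last by move=> v _; rewrite sum1_set hdegB.
  by rewrite sum_nat_const cardT -cardE.
apply: le_trans hcost.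
have hc1 : 0 <= (#|B|%:R / #|A|%:R : R) by rewrite divr_ge0.
case: (posnP s) => [s0|spos].
  by rewrite s0 invr0 mulr0 addr_ge0 // mulrn_wge0.
have ks0 : (0 < k * s)%N by rewrite muln_gt0 hk0.
have A0 : (0 < #|A|)%N by move: ks0; rewrite hEk in hEA; rewrite hEA muln_gt0 => /andP [].
have B0 : (0 < #|B|)%N by move: ks0; rewrite hEk in hEB; rewrite hEB muln_gt0 => /andP [].
apply: le_trans (_ : #|B|%:R / #|A|%:R *+ #|AF| + #|BR|%:R <= _); last first.
  by rewrite lerD2l ler_nat.
have e1 : (s%:R * k%:R : R) = #|A|%:R * d%:R by rewrite -!natrM mulnC -hEA hEk.
have e2 : (s%:R * k%:R : R) = #|B|%:R * d'%:R by rewrite -!natrM mulnC -hEB hEk.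
have Ar0 : (#|A|%:R : R) != 0 by rewrite pnatr_eq0 -lt0n.
have eq : ((#|B|%:R / #|A|%:R *+ #|AF| + #|BR|%:R) * (s%:R * k%:R) : R)
    = #|B|%:R * (d%:R *+ #|AF| + d'%:R *+ #|BR|).
  rewrite -(mulr_natr (#|B|%:R / #|A|%:R)) -(mulr_natr d%:R) -(mulr_natr d'%:R).
  rewrite mulrDl {1}e1 e2; field; exact: Ar0.
rewrite ler_pdivrMr ?ltr0n // -(ler_pM2r (_ : 0 < k%:R)) ?ltr0n // -[_ * s%:R * k%:R]mulrA eq.
rewrite mulrAC (mulrC _ #|B|%:R) ler_pM2l ?ltr0n //.
Qed.
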